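(* For any finite alphabet $\mathfrak{G}$ and any $\mathfrak{G}$-trees $\mathfrak{s}$, $\mathfrak{t}$, $\mathfrak{s}'$, $\mathfrak{t}'$ such that $\mathfrak{s} \preceq \mathfrak{t}$ and $\mathfrak{s}' \preceq \mathfrak{t}'$, the intervals $[\mathfrak{s},\mathfrak{t}]$ and $[\mathfrak{s}',\mathfrak{t}']$ of the $\mathfrak{G}$-prefix poset are isomorphic as posets if and only if $\mathrm{sh}(\lozenge_{|\mathfrak{s}|}[\mathfrak{t}\setminus\mathfrak{s}]) = \mathrm{sh}(\lozenge_{|\mathfrak{s}'|}[\mathfrak{t}'\setminus\mathfrak{s}'])$.
   Context: $\mathfrak{G}$ is a finite alphabet (letters with arities $\geq 1$). A $\mathfrak{G}$-tree is either the leaf (the tree with no internal node) or $\mathtt{a}[\mathfrak{s}_1,\dots,\mathfrak{s}_{|\mathtt{a}|}]$ with root decorated by $\mathtt{a}\in\mathfrak{G}$; $|\mathfrak{t}|$ denotes the number of leaves, ordered left to right, and $\mathfrak{t}\circ[\mathfrak{r}_1,\dots,\mathfrak{r}_{|\mathfrak{t}|}]$ is obtained by grafting the root of each $\mathfrak{r}_i$ onto the $i$-th leaf of $\mathfrak{t}$. The $\mathfrak{G}$-prefix poset is the set of $\mathfrak{G}$-trees ordered by $\mathfrak{s}\preceq\mathfrak{t}$ iff $\mathfrak{s}$ is a prefix of $\mathfrak{t}$, i.e. $\mathfrak{t}=\mathfrak{s}\circ[\mathfrak{r}_1,\dots,\mathfrak{r}_{|\mathfrak{s}|}]$ for some $\mathfrak{G}$-trees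 $\mathfrak{r}_i$ (equivalently, $\mathfrak{t}$ is obtained from $\mathfrak{s}$ by successively replacing leaves by internal nodes decorated by letters). In this case the difference $\mathfrak{t}\setminus\mathfrak{s}$ is the (unique) forest $(\mathfrak{r}_1,\dots,\mathfrak{r}_{|\mathfrak{s}|})$, and $\lozenge_k[\mathfrak{r}_1,\dots,\mathfrak{r}_k]$ is the tree obtained by grafting $\mathfrak{r}_1,\dots,\mathfrak{r}_k$ onto a root decorated by a new letter $\lozenge_k$ of arity $k$. A shadow is a finite (possibly empty) multiset of shadows (a nonplanar undecorated rooted tree). For a $\mathfrak{G}$-tree $\mathfrak{t}$ different from the leaf with root of arity $k$, $\mathrm{sh}(\mathfrak{t})$ is the multiset of the $\mathrm{sh}(\mathfrak{t}(i))$ for those $i\in[k]$ such that the $i$-th subtree $\mathfrak{t}(i)$ of the root is not the leaf. *)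

(* Defs.v *)
From Stdlib Require Import List Permutation.
From mathcomp Require Import all_boot.

Set Implicit Arguments.
Unset Strict Implicit.
Unset Printing Implicit Defensive.

Inductive tree (G : Type) : Type :=
| Leaf : tree G
| Node : G -> seq (tree G) -> tree G.
Arguments Leaf {G}.

Section Trees.
Variable G : Type.

Fixpoint wf (ar : G -> nat) (t : tree G) : bool :=
  match t with
  | Leaf => true
  | Node a ts => (size ts == ar a) && all (wf ar) ts
  end.

Fixpoint nleaves (t : tree G) : nat :=
  match t with
  | Leaf => 1
  | Node _ ts => sumn (map nleaves ts)
  end.

(* Grafting the trees of rs, left to right, onto the leaves of t;
   returns the grafted tree and the unused trees. *)
Fixpoint graft_aux (t : tree G) (rs : seq (tree G)) {struct t}
  : tree G * seq (tree G) :=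
  match t with
  | Leaf => match rs with [::] => (Leaf, [::]) | r :: rs' => (r, rs') end
  | Node a ts =>
      let p := (fix gl (us : seq (tree G)) (rs : seq (tree G)) {struct us}
                  : seq (tree G) * seq (tree G) :=
                  match us with
                  | [::] => ([::], rs)
                  | u :: us' =>
                      let (u', rs1) := graft_aux u rs in
                      let (us'', rs2) := gl us' rs1 in (u' :: us'', rs2)
                  end) ts rs in
      (Node a p.1, p.2)
  end.

Definition graft (t : tree G) (rs : seq (tree G)) : tree G := (graft_aux t rs).1.

Definition prefix (ar : G -> nat) (s t : tree G) : Prop :=
  exists rs : seq (tree G),
    size rs = nleaves s /\ all (wf ar) rs /\ t = graft s rs.

Definition in_interval (ar : G -> nat) (s t u : tree G) : Prop :=
  wf ar u /\ prefix ar s u /\ prefix ar u t.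

End Trees.

Fixpoint tmap (G H : Type) (h : G -> H) (t : tree G) : tree H :=
  match t with
  | Leaf => Leaf
  | Node a ts => Node (h a) (map (tmap h) ts)
  end.

(* lozenge_k [r_1, ..., r_k] : a root decorated by a new letter (None) of
   arity k = size rs, over the alphabet option G. *)
Definition diamond (G : Type) (rs : seq (tree G)) : tree (option G) :=
  Node None (map (tmap Some) rs).

Definition intervals_iso (G : Type) (ar : G -> nat) (s t s' t' : tree G) : Prop :=
  exists (f g : tree G -> tree G),
    (forall u, in_interval ar s t u ->
               in_interval ar s' t' (f u) /\ g (f u) = u) /\
    (forall v, in_interval ar s' t' v ->
               in_interval ar s t (g v) /\ f (g v) = v) /\
    (forall u v, in_interval ar s t u -> in_interval ar s t v ->
                 (prefix ar u v <-> prefix ar (f u) (f v))).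

(* Shadows: finite multisets of shadows, represented by rose trees
   whose children lists are compared up to permutation. *)
Inductive rtree : Type := RNode : list rtree -> rtree.

Inductive sheq : rtree -> rtree -> Prop :=
| sheq_node (l1 l2 l2' : list rtree) :
    Permutation l2 l2' -> Forall2 sheq l1 l2' -> sheq (RNode l1) (RNode l2).

(* sh(t) : multiset of sh(t(i)) over the non-leaf subtrees of the root.
   (The value on the leaf is irrelevant; sh is only used on non-leaves.) *)
Fixpoint sh (G : Type) (t : tree G) : rtree :=
  match t with
  | Leaf => RNode [::]
  | Node _ ts =>
      RNode ((fix shl (us : seq (tree G)) : list rtree :=
                match us with
                | [::] => [::]
                | Leaf :: us' => shl us'
                | u :: us' => sh u :: shl us'
                end) ts)
  end.

(* Main.v *)
Require Import Defs.
From Stdlib Require Import List Permutation.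
From mathcomp Require Import all_boot zify.
Set Implicit Arguments. Unset Strict Implicit. Unset Printing Implicit Defensive.

Lemma catE (T : Type) (s1 s2 : seq T) : cat s1 s2 = app s1 s2.
Proof. by elim: s1 => //= x s ->. Qed.
Lemma mapE (T U : Type) (f : T -> U) (s : seq T) : seq.map f s = List.map f s.
Proof. by elim: s => //= x s ->. Qed.

Section Gen.
Variable G : Type.
Notation tree := (tree G).

Section TI.
Variables (P : tree -> Prop) (Q : seq tree -> Prop).
Hypotheses (HL : P Leaf) (HN : forall a ts, Q ts -> P (Node a ts))
  (Hnil : Q [::]) (Hcons : forall t ts, P t -> Q ts -> Q (t :: ts)).
Fixpoint tind (t : tree) : P t :=
  match t with
  | Leaf => HL
  | Node a ts => HN a ((fix li (ts : seq tree) : Q ts :=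
      match ts with [::] => Hnil | t :: ts' => Hcons (tind t) (li ts') end) ts)
  end.
Fixpoint lind (ts : seq tree) : Q ts :=
  match ts with [::] => Hnil | t :: ts' => Hcons (tind t) (lind ts') end.
End TI.
Lemma tlind (P : tree -> Prop) (Q : seq tree -> Prop) :
  P Leaf -> (forall a ts, Q ts -> P (Node a ts)) -> Q [::] ->
  (forall t ts, P t -> Q ts -> Q (t :: ts)) -> (forall t, P t) /\ (forall ts, Q ts).
Proof. move=> HL HN Hnil Hcons; split; [exact: (tind HL HN Hnil Hcons)|exact: (lind HL HN Hnil Hcons)]. Qed.

Fixpoint pre (u v : tree) : Prop :=
  match u with
  | Leaf => True
  | Node a us => match v with
    | Leaf => False
    | Node b vs => a = b /\
       (fix prl (us vs : seq tree) : Prop :=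
         match us, vs with
         | [::], [::] => True
         | u1 :: us1, v1 :: vs1 => pre u1 v1 /\ prl us1 vs1
         | _, _ => False end) us vs
    end
  end.
Fixpoint preL (us vs : seq tree) : Prop :=
  match us, vs with
  | [::], [::] => True
  | u1 :: us1, v1 :: vs1 => pre u1 v1 /\ preL us1 vs1
  | _, _ => False end.
Lemma pre_NN a b us vs : pre (Node a us) (Node b vs) = (a = b /\ preL us vs).
Proof. by []. Qed.
Lemma pre_NL a us : pre (Node a us) Leaf = False. Proof. by []. Qed.

Lemma preL_size us vs : preL us vs -> size us = size vs.
Proof. elim: us vs => [|u us IH] [|v vs] //= [_ /IH ->] //. Qed.

Lemma pre_refl_all : (forall u, pre u u) /\ (forall us, preL us us).
Proof.
by apply: (@tlind (fun u => pre u u) (fun us => preL us us)) => //=.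
Qed.
Lemma pre_refl u : pre u u. Proof. exact: pre_refl_all.1. Qed.
Lemma preL_refl us : preL us us. Proof. exact: pre_refl_all.2. Qed.

Lemma pre_trans_all : (forall u v w, pre u v -> pre v w -> pre u w) /\
  (forall us vs ws, preL us vs -> preL vs ws -> preL us ws).
Proof.
apply: (@tlind (fun u => forall v w, pre u v -> pre v w -> pre u w) (fun us => forall vs ws, preL us vs -> preL vs ws -> preL us ws)) => //=.
- move=> a ts IH [|b vs] [|c ws] //= [-> H1] [-> H2]; split => //; exact: IH H1 H2.
- by move=> [|??] [|??].
- move=> t ts IHt IHts [|v vs] [|w ws] //= [H1 H2] [H3 H4]; split; [exact: IHt H1 H3|exact: IHts H2 H4].
Qed.
Lemma pre_trans u v w : pre u v -> pre v w -> pre u w. Proof. exact: pre_trans_all.1. Qed.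
Lemma preL_trans us vs ws : preL us vs -> preL vs ws -> preL us ws. Proof. exact: pre_trans_all.2. Qed.

Definition lv (l : seq tree) : seq tree := seq.map (fun _ => Leaf) l.
Lemma size_lv l : size (lv l) = size l. Proof. exact: size_map. Qed.
Lemma lv_cat l m : lv (l ++ m) = lv l ++ lv m. Proof. exact: map_cat. Qed.
Lemma lv_pre l m : size l = size m -> preL (lv l) m.
Proof. elim: l m => [|x l IH] [|y m] //= [/IH]; by split. Qed.
Lemma lv_eq l m : size l = size m -> lv l = lv m.
Proof. elim: l m => [|x l IH] [|y m] //= [/IH ->] //. Qed.
Lemma pre_leaf u : pre u Leaf -> u = Leaf. Proof. by case: u. Qed.
Lemma preL_lv y l : preL y (lv l) -> y = lv l.
Proof. elim: y l => [|u y IH] [|x l] //= [/pre_leaf -> /IH ->] //. Qed.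

Lemma preL_cat X X' Y Y' : size X = size X' ->
  preL (X ++ Y) (X' ++ Y') <-> preL X X' /\ preL Y Y'.
Proof.
elim: X X' => [|x X IH] [|x' X'] //=; first by (split => // [[]]).
move=> [/IH {}IH]; rewrite IH; tauto.
Qed.
Lemma preL_split3 X X' x x' Y Y' : size X = size X' ->
  preL (X ++ x :: Y) (X' ++ x' :: Y') <-> [/\ preL X X', pre x x' & preL Y Y'].
Proof. move/preL_cat => ->; simpl; split; [case=> ? []|case]; by []. Qed.

Lemma preL_splitR y A x B : preL y (A ++ x :: B) ->
  exists y1 y0 y2, [/\ y = y1 ++ y0 :: y2, size y1 = size A, preL y1 A, pre y0 x & preL y2 B].
Proof.
elim: A y => [|a A IH] [|u y] //=.
- move=> [H1 H2]; by exists [::], u, y.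
- move=> [H1 /IH [y1 [y0 [y2 [-> H3 H4 H5 H6]]]]].
  exists (u :: y1), y0, y2; split => //=; by rewrite H3.
Qed.

Lemma split_nonleaf y rs : preL y rs -> y = lv y \/
  exists Y1 c ws Y2 R1 ds R2, y = Y1 ++ Node c ws :: Y2 /\ rs = R1 ++ Node c ds :: R2 /\
     [/\ size Y1 = size R1, preL Y1 R1, preL ws ds & preL Y2 R2].
Proof.
elim: y rs => [|u y IH] [|r rs] //=; first by left.
move=> [Hu Hy']; case: (IH _ Hy') => [Hy|[Y1 [c [ws [Y2 [R1 [ds [R2 [E1 [E2 [E3 E4 E5 E6]]]]]]]]]]].
- case: u Hu => [|a us] Hu; first by left; rewrite -Hy.
  case: r Hu => [|b vs] //= [<- Hu]; right.
  exists [::], a, us, y, [::], vs, rs; do 2!split => //. 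
- right; exists (u :: Y1), c, ws, Y2, (r :: R1), ds, R2; rewrite E1 E2 /=; do 2!split => //=; by rewrite E3.
Qed.

End Gen.
Arguments preL {G}.
Arguments pre {G}.


Definition isoW {A B : Type} (P : A -> Prop) (le : A -> A -> Prop) (Q : B -> Prop) (le' : B -> B -> Prop)
  (f : A -> B) (g : B -> A) :=
  (forall u, P u -> Q (f u) /\ g (f u) = u) /\
  (forall v, Q v -> P (g v) /\ f (g v) = v) /\
  (forall u v, P u -> P v -> (le u v <-> le' (f u) (f v))).
Definition piso {A B : Type} (P : A -> Prop) (le : A -> A -> Prop) (Q : B -> Prop) (le' : B -> B -> Prop) := exists f g, isoW P le Q le' f g.
Definition least {A : Type} (P : A -> Prop) (le : A -> A -> Prop) z := P z /\ forall w, P w -> le z w.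
Definition atom {A : Type} (P : A -> Prop) (le : A -> A -> Prop) a :=
  [/\ P a, ~ least P le a & forall y, P y -> le y a -> least P le y \/ y = a].
Section Iso.
Variables (A B : Type).
Implicit Types (P : A -> Prop) (le : A -> A -> Prop) (Q : B -> Prop) (f : A -> B) (g : B -> A).


Lemma isoW_sym P le Q (le' : B -> B -> Prop) f g : isoW P le Q le' f g -> isoW Q le' P le g f.
Proof.
move=> [H1 [H2 H3]]; split => //; split => // u v Pu Pv.
have [Pu' Eu] := H2 _ Pu; have [Pv' Ev] := H2 _ Pv.
by rewrite H3 // Eu Ev.
Qed.
Lemma piso_sym P le Q (le' : B -> B -> Prop) : piso P le Q le' -> piso Q le' P le.
Proof. move=> [f [g H]]; exists g, f; exact: isoW_sym. Qed.


Lemma least_f P le Q (le' : B -> B -> Prop) f g z : isoW P le Q le' f g -> P z ->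
  (least P le z <-> least Q le' (f z)).
Proof.
move=> [H1 [H2 H3]] Pz; split.
- move=> [_ Hz]; split; first by case: (H1 _ Pz).
  move=> w Qw; have [Pw Ew] := H2 _ Qw; rewrite -Ew -H3 //; exact: Hz.
- move=> [_ Hz]; split => // w Pw; rewrite H3 //; apply: Hz; by case: (H1 _ Pw).
Qed.

Lemma atom_f P le Q (le' : B -> B -> Prop) f g a : isoW P le Q le' f g -> atom P le a -> atom Q le' (f a).
Proof.
move=> I [Pa Hna Ha]; have I' := I; move: I' => [H1 [H2 H3]].
split; first by case: (H1 _ Pa).
- by rewrite -(least_f I Pa).
- move=> y Qy Hy; have [Py Ey] := H2 _ Qy.
  have: le (g y) a by rewrite H3 // Ey.
  case/(Ha _ Py) => [L|E]; [left; rewrite -Ey -(least_f I Py) // | right; by rewrite -Ey E].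
Qed.

Lemma isoW_res P le Q (le' : B -> B -> Prop) f g (P1 : A -> Prop) (Q1 : B -> Prop) :
  isoW P le Q le' f g -> (forall u, P1 u -> P u) -> (forall v, Q1 v -> Q v) ->
  (forall u, P u -> (P1 u <-> Q1 (f u))) -> isoW P1 le Q1 le' f g.
Proof.
move=> [H1 [H2 H3]] HP HQ HPQ; split; [|split].
- move=> u P1u; have [Qu Eu] := H1 _ (HP _ P1u); split => //; by rewrite -HPQ //; apply: HP.
- move=> v Q1v; have [Pv Ev] := H2 _ (HQ _ Q1v); split => //; by rewrite HPQ // Ev.
- move=> u v Pu Pv; apply: H3; exact: HP.
Qed.

Lemma piso_ext P le Q (le' : B -> B -> Prop) (P' : A -> Prop) : piso P le Q le' -> (forall u, P u <-> P' u) ->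
  piso P' le Q le'.
Proof.
move=> [f [g [H1 [H2 H3]]]] E; exists f, g; split; [|split].
- move=> u /E; exact: H1.
- move=> v /H2 [? ?]; split => //; exact/E.
- move=> u v /E Pu /E Pv; exact: H3.
Qed.
End Iso.

Lemma isoW_trans (A B C : Type) (P : A -> Prop) le (Q : B -> Prop) le' (R : C -> Prop) le'' (f1 : A -> B) g1 (f2 : B -> C) g2 :
  isoW P le Q le' f1 g1 -> isoW Q le' R le'' f2 g2 ->
  isoW P le R le'' (fun x => f2 (f1 x)) (fun y => g1 (g2 y)).
Proof.
move=> [H1 [H2 H3]] [K1 [K2 K3]]; split; [|split].
- move=> u Pu; have [Qu Eu] := H1 _ Pu; have [Ru Eu'] := K1 _ Qu; by rewrite Eu' Eu.
- move=> v Rv; have [Qv Ev] := K2 _ Rv; have [Pv Ev'] := H2 _ Qv; by rewrite Ev' Ev.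
- move=> u v Pu Pv; rewrite H3 // K3 //; [by case: (H1 _ Pu)|by case: (H1 _ Pv)].
Qed.
Lemma piso_trans (A B C : Type) (P : A -> Prop) le (Q : B -> Prop) le' (R : C -> Prop) le'' :
  piso P le Q le' -> piso Q le' R le'' -> piso P le R le''.
Proof. move=> [f1 [g1 H]] [f2 [g2 K]]; eexists; eexists; exact: isoW_trans H K. Qed.
Lemma piso_refl (A : Type) (P : A -> Prop) le : piso P le P le.
Proof. exists id, id; split; [|split] => //. Qed.

Definition Cset {A : Type} (P : A -> Prop) (le : A -> A -> Prop) a y :=
  [/\ P y, le a y & forall z, P z -> le z y -> least P le z \/ le a z].
Definition Dset {A : Type} (P : A -> Prop) (le : A -> A -> Prop) a y := P y /\ ~ le a y.

Lemma Cset_f (A B : Type) (P : A -> Prop) le (Q : B -> Prop) le' f g a :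
  isoW P le Q le' f g -> P a -> forall y, P y -> (Cset P le a y <-> Cset Q le' (f a) (f y)).
Proof.
move=> I Pa y Py; have I' := I; move: I' => [H1 [H2 H3]].
have Qa := (H1 _ Pa).1; have Qy := (H1 _ Py).1.
split.
- move=> [_ Hay Hz]; split => //; first by rewrite -H3.
  move=> z Qz Hzy; have [Pz Ez] := H2 _ Qz.
  have: le (g z) y by rewrite H3 // Ez.
  case/(Hz _ Pz) => [L|L]; [left; by rewrite -Ez -(least_f I Pz) | right; by rewrite -Ez -H3].
- move=> [_ Hay Hz]; split => //; first by rewrite H3.
  move=> z Pz Hzy; have Qz := (H1 _ Pz).1.
  have: le' (f z) (f y) by rewrite -H3.
  case/(Hz _ Qz) => [L|L]; [left; by rewrite (least_f I Pz) | right; by rewrite H3].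
Qed.

Lemma Dset_f (A B : Type) (P : A -> Prop) le (Q : B -> Prop) le' f g a :
  isoW P le Q le' f g -> P a -> forall y, P y -> (Dset P le a y <-> Dset Q le' (f a) (f y)).
Proof.
move=> [H1 [H2 H3]] Pa y Py; have Qy := (H1 _ Py).1; rewrite /Dset H3 //; tauto.
Qed.


Section E.
Variable G : Type.
Notation tree := (tree G).
Definition inE (rs : seq tree) := fun y => preL y rs.
Definition atomS (A : seq tree) b (cs B : seq tree) := lv A ++ Node b (lv cs) :: lv B.

Lemma lv_idem (l : seq tree) : lv (lv l) = lv l. Proof. by rewrite /lv -map_comp. Qed.

Lemma lv_least' rs z : inE rs z -> z = lv z -> least (inE rs) preL z.
Proof.
move=> Hz Ez; split => // w Hw; rewrite Ez; apply: lv_pre.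
by rewrite (preL_size Hz) (preL_size Hw).
Qed.

Lemma lv_nonode (l : seq tree) Z1 c ws Z2 : lv l = Z1 ++ Node c ws :: Z2 -> False.
Proof. elim: Z1 l => [|z Z1 IH] [|x l] //= [_]; exact: IH. Qed.

Lemma node_not_least rs Z1 c ws Z2 : ~ least (inE rs) preL (Z1 ++ Node c ws :: Z2).
Proof.
move=> [Hz /(_ (lv rs))]; rewrite /inE.
have H : preL (lv rs) rs by apply: lv_pre.
move/(_ H)/preL_lv => E; exact: (lv_nonode (esym E)).
Qed.

Lemma atomS_in A b cs B : inE (A ++ Node b cs :: B) (atomS A b cs B).
Proof.
rewrite /inE /atomS preL_split3 ?size_lv //; split; try apply: lv_pre; rewrite ?size_lv //.
rewrite pre_NN; split => //; apply: lv_pre; by rewrite ?size_lv.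
Qed.

Lemma atomS_atom A b cs B : atom (inE (A ++ Node b cs :: B)) preL (atomS A b cs B).
Proof.
split; [exact: atomS_in | exact: node_not_least |].
move=> y Hy; rewrite /atomS => /preL_splitR [y1 [y0 [y2 [Ey Hs H1 H0 H2]]]].
move: H1 H2 => /preL_lv E1 /preL_lv E2; subst y y1 y2.
case: y0 Hy H0 => [|c ws] Hy H0.
- left; apply: lv_least' => //; by rewrite lv_cat /= !lv_idem.
- right; move: H0; rewrite pre_NN => [[-> /preL_lv ->]] //.
Qed.

Lemma atom_char rs a : atom (inE rs) preL a ->
  exists A b cs B, rs = A ++ Node b cs :: B /\ a = atomS A b cs B.
Proof.
move=> [Ha Hnl Hat]; case: (split_nonleaf Ha) => [E|].
  by case: Hnl; apply: lv_least'.
move=> [Y1 [c [ws [Y2 [R1 [ds [R2 [Ea [Er [Hs H1 H2 H3]]]]]]]]]].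
exists R1, c, ds, R2; split => //.
have Hz : inE rs (atomS R1 c ds R2) by rewrite Er; exact: atomS_in.
have Hle : preL (atomS R1 c ds R2) a.
  rewrite Ea /atomS preL_split3 ?size_lv //; split.
  - apply: lv_pre; by rewrite ?size_lv.
  - rewrite pre_NN; split => //; apply: lv_pre; by rewrite ?size_lv (preL_size H2).
  - apply: lv_pre; by rewrite ?size_lv (preL_size H3).
case: (Hat _ Hz Hle) => [L|->] //.
by case: (@node_not_least rs (lv R1) c (lv ds) (lv R2)).
Qed.

Lemma C_char A b cs B y :
  Cset (inE (A ++ Node b cs :: B)) preL (atomS A b cs B) y <->
  exists us, y = lv A ++ Node b us :: lv B /\ preL us cs.
Proof.
split.
- move=> [Hy Hay Hz].
  have [y1 [y0 [y2 [Ey Hs H1 H0 H2]]]] := preL_splitR Hy.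
  move: Hay; rewrite Ey /atomS preL_split3 ?size_lv // => -[_ Ha0 _].
  case: y0 Ey H0 Ha0 => [|c us] // Ey; rewrite !pre_NN => -[Ecb Hus] _; subst c.
  exists us; split => //.
  case: (split_nonleaf H1) => [E1|].
  + case: (split_nonleaf H2) => [E2|].
    * by rewrite E1 E2 (lv_eq Hs) (lv_eq (preL_size H2)).
    * move=> [Y1 [c' [ws [Y2 [R1 [ds [R2 [EY [EB [Hs' K1 K2 K3]]]]]]]]]].
      pose z := lv A ++ Leaf :: atomS R1 c' ds R2.
      have Hz1 : inE (A ++ Node b cs :: B) z.
        rewrite /inE /z preL_split3 ?size_lv //; split => //.
        - apply: lv_pre; by rewrite ?size_lv.
        - rewrite EB; exact: atomS_in.
      have Hz2 : preL z y.
        rewrite Ey /z preL_split3 ?size_lv //; split => //.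
        - apply: lv_pre; by rewrite ?size_lv.
        - rewrite EY /atomS preL_split3 ?size_lv //; split.
          + apply: lv_pre; by rewrite ?size_lv.
          + rewrite pre_NN; split => //; apply: lv_pre; by rewrite ?size_lv (preL_size K2).
          + apply: lv_pre; rewrite ?size_lv; have := preL_size H2.
            by rewrite EY EB !size_cat /= Hs' => /addnI [].
      case: (Hz _ Hz1 Hz2) => [|].
      * move=> L; exfalso; move: L.
        have := (@node_not_least (A ++ Node b cs :: B) (lv A ++ Leaf :: lv R1) c' (lv ds) (lv R2)).
        by rewrite -catA.
      * by rewrite /z /atomS preL_split3 ?size_lv // => -[].
  + move=> [Y1 [c' [ws [Y2 [R1 [ds [R2 [EY [EA [Hs' K1 K2 K3]]]]]]]]]].
    pose z := atomS R1 c' ds R2 ++ Leaf :: lv B.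
    have HsA : size (atomS R1 c' ds R2) = size A by rewrite EA /atomS !size_cat /= !size_lv.
    have Hz1 : inE (A ++ Node b cs :: B) z.
      rewrite /inE /z preL_split3 //; split => //.
      - rewrite EA; exact: atomS_in.
      - apply: lv_pre; by rewrite ?size_lv.
    have Hz2 : preL z y.
      rewrite Ey /z preL_split3; last by rewrite HsA.
      split => //; last by apply: lv_pre; rewrite ?size_lv (preL_size H2).
      rewrite EY /atomS preL_split3 ?size_lv //; split.
      + apply: lv_pre; by rewrite ?size_lv.
      + rewrite pre_NN; split => //; apply: lv_pre; by rewrite ?size_lv (preL_size K2).
      + apply: lv_pre; rewrite ?size_lv; have := Hs.
        by rewrite EY EA !size_cat /= Hs' => /addnI [].
    case: (Hz _ Hz1 Hz2) => [|].
    * by rewrite /z /atomS -catA => /node_not_least.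
    * by rewrite /z /atomS preL_split3 ?HsA ?size_lv // => -[].
- move=> [us [Ey Hus]]; split.
  + rewrite Ey /inE preL_split3 ?size_lv //; split => //; apply: lv_pre; by rewrite ?size_lv.
  + rewrite Ey /atomS preL_split3 ?size_lv //; split; try (apply: lv_pre; by rewrite ?size_lv).
    rewrite pre_NN; split => //; apply: lv_pre; by rewrite ?size_lv (preL_size Hus).
  + move=> z Hz; rewrite Ey => /preL_splitR [z1 [z0 [z2 [Ez Hs H1 H0 H2]]]].
    move: H1 H2 => /preL_lv E1 /preL_lv E2; subst z z1 z2.
    case: z0 Hz H0 => [|c ws] Hz H0.
    * left; apply: lv_least' => //; by rewrite lv_cat /= !lv_idem.
    * right; move: H0; rewrite pre_NN => -[<- Hws].
      rewrite /atomS preL_split3 ?size_lv //; split; try (apply: lv_pre; by rewrite ?size_lv).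
      rewrite pre_NN; split => //; apply: lv_pre.
      by rewrite -(preL_size Hus) (preL_size Hws).
Qed.

Lemma D_char A b cs B y :
  Dset (inE (A ++ Node b cs :: B)) preL (atomS A b cs B) y <-> inE (A ++ Leaf :: B) y.
Proof.
split.
- move=> [Hy Hn]; have [y1 [y0 [y2 [Ey Hs H1 H0 H2]]]] := preL_splitR Hy.
  rewrite Ey /inE preL_split3 //; split => //.
  case: y0 Ey H0 => [|c us] // Ey; rewrite pre_NN => -[Ec Hus]; case: Hn.
  rewrite Ey /atomS preL_split3 ?size_lv //; split.
  + apply: lv_pre; by rewrite ?size_lv.
  + rewrite pre_NN Ec; split => //; apply: lv_pre; by rewrite ?size_lv (preL_size Hus).
  + apply: lv_pre; by rewrite ?size_lv (preL_size H2).
- move=> Hy; have [y1 [y0 [y2 [Ey Hs H1 H0 H2]]]] := preL_splitR Hy.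
  move/pre_leaf: H0 => E0; subst y y0; split.
  + rewrite /inE preL_split3 //.
  + by rewrite /atomS preL_split3 ?size_lv // => -[].
Qed.

Lemma C_iso A b cs B :
  piso (fun y => exists us, y = lv A ++ Node b us :: lv B /\ preL us cs) preL (inE cs) preL.
Proof.
exists (fun y => match drop (size A) y with Node _ us :: _ => us | _ => [::] end).
exists (fun us => lv A ++ Node b us :: lv B).
have Hd us : drop (size A) (lv A ++ Node b us :: lv B) = Node b us :: lv B.
  by rewrite drop_size_cat ?size_lv.
split; [|split].
- move=> y [us [-> Hus]]; by rewrite Hd.
- move=> v Hv; rewrite Hd; split => //; by exists v.
- move=> y z [us [-> Hus]] [vs [-> Hvs]]; rewrite !Hd preL_split3 ?size_lv // pre_NN.
  split; [by case=> _ []|move=> H; split; try apply: preL_refl; by split].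
Qed.
End E.


Lemma sheq_comb X X' L1 L2 M1 M2 : sheq X X' ->
  sheq (RNode (L1 ++ L2)) (RNode (M1 ++ M2)) ->
  sheq (RNode (L1 ++ X :: L2)) (RNode (M1 ++ X' :: M2)).
Proof.
move=> HX H; inversion H as [l1 l2 l2' Hp Hf]; subst.
rewrite catE in Hf; have [N1 [N2 [F1 [F2 EN]]]] := Forall2_app_inv_l _ _ Hf.
apply: (@sheq_node _ _ (N1 ++ X' :: N2)).
- rewrite !catE in Hp *; rewrite EN in Hp.
  apply: Permutation_trans; first by apply: Permutation_sym; apply: Permutation_middle.
  apply: Permutation_trans; last by apply: Permutation_middle.
  by apply: perm_skip.
- rewrite !catE; apply: Forall2_app => //; by constructor.
Qed.

Section F.
Variable G : Type.
Notation tree := (tree G).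

Fixpoint shl (us : seq tree) : list rtree :=
  match us with
  | [::] => [::]
  | Leaf :: us' => shl us'
  | u :: us' => sh u :: shl us'
  end.
Lemma sh_Node a ts : sh (Node a ts) = RNode (shl ts). Proof. by []. Qed.
Lemma shl_cat A B : shl (A ++ B) = shl A ++ shl B.
Proof. elim: A => [|[|a ts] A IH] //=; by rewrite IH. Qed.
Lemma shl_N a ts B : shl (Node a ts :: B) = RNode (shl ts) :: shl B. Proof. by []. Qed.
Lemma shl_L B : shl (Leaf :: B) = shl B. Proof. by []. Qed.
Lemma shl_lv (l : seq tree) : shl (lv l) = [::]. Proof. by elim: l. Qed.

Fixpoint tsize (t : tree) : nat :=
  match t with Leaf => 0 | Node _ ts => (sumn (seq.map tsize ts)).+1 end.
Definition fsize (l : seq tree) := sumn (seq.map tsize l).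
Lemma fsize_cat A B : fsize (A ++ B) = fsize A + fsize B.
Proof. by rewrite /fsize map_cat sumn_cat. Qed.

Lemma fwd n : forall rs rs' : seq tree, fsize rs < n ->
  piso (inE rs) preL (inE rs') preL -> sheq (RNode (shl rs)) (RNode (shl rs')).
Proof.
elim: n => [//|n IH] rs rs' Hn [f [g I]].
case: (split_nonleaf (preL_refl rs)) => [Ers | [Y1 [b [cs [Y2 [R1 [ds [R2 [E1 [E2 [Hs K1 K2 K3]]]]]]]]]]].
- case: (split_nonleaf (preL_refl rs')) => [Ers' | [Y1 [b [cs [Y2 [R1 [ds [R2 [E1 [E2 [Hs K1 K2 K3]]]]]]]]]]].
  + rewrite Ers Ers' !shl_lv; apply: (@sheq_node _ _ [::]) => //.
  + have Ha : atom (inE rs') preL (atomS R1 b ds R2) by rewrite E2; exact: atomS_atom.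
    have [A [c [es [B [EA _]]]]] := atom_char (atom_f (isoW_sym I) Ha).
    exfalso; rewrite Ers in EA; exact: lv_nonode EA.
- have Ha : atom (inE rs) preL (atomS R1 b ds R2) by rewrite E2; exact: atomS_atom.
  have [A' [b' [cs' [B' [EA' Efa]]]]] := atom_char (atom_f I Ha).
  have Pa : inE rs (atomS R1 b ds R2) by case: Ha.
  have Hsz : fsize rs = fsize R1 + (fsize ds).+1 + fsize R2.
    by rewrite E2 fsize_cat /fsize /= addnA.
  rewrite E2 EA' !shl_cat !shl_N.
  apply: sheq_comb.
  + apply: (IH ds cs'); first by move: Hn; rewrite Hsz; lia.
    apply: piso_trans; first by apply: piso_sym; exact: (C_iso R1 b ds R2).
    apply: piso_trans; last by exact: (C_iso A' b' cs' B').
    apply: piso_ext; last by move=> u; exact: (C_char R1 b ds R2 u).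
    apply: piso_sym; apply: piso_ext; last by move=> u; exact: (C_char A' b' cs' B' u).
    exists g, f; apply: isoW_sym; rewrite -E2 -Efa -EA'.
    apply: (isoW_res I); [by move=> u []|by move=> u []|].
    exact: Cset_f I Pa.
  + rewrite -(shl_L R2) -(shl_L B') -!shl_cat; apply: (IH (R1 ++ Leaf :: R2) (A' ++ Leaf :: B')).
      by move: Hn; rewrite Hsz fsize_cat /fsize /=; lia.
    apply: piso_ext; last by move=> u; exact: (D_char R1 b ds R2 u).
    apply: piso_sym; apply: piso_ext; last by move=> u; exact: (D_char A' b' cs' B' u).
    exists g, f; apply: isoW_sym; rewrite -E2 -Efa -EA'.
    apply: (isoW_res I); [by move=> u []|by move=> u []|].
    exact: Dset_f I Pa.
Qed.
End F.


Section B.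
Variable G : Type.
Notation tree := (tree G).
Definition Ft (r : tree) := fun u => pre u r.
Definition isNode (t : tree) : bool := if t is Node _ _ then true else false.

Lemma E_leaf (l : seq tree) : piso (inE (Leaf :: l)) preL (inE l) preL.
Proof.
exists behead, (fun us => Leaf :: us); split; [|split].
- move=> [|u us] //= [/pre_leaf -> H]; by split.
- move=> v Hv; by split.
- move=> [|u us] [|v vs] //= [/pre_leaf -> H1] [/pre_leaf -> H2]; by split => // -[].
Qed.

Lemma E_cons (r r' : tree) (l l' : seq tree) : piso (Ft r) pre (Ft r') pre -> piso (inE l) preL (inE l') preL ->
  piso (inE (r :: l)) preL (inE (r' :: l')) preL.
Proof.
move=> [f1 [g1 [H1 [H2 H3]]]] [f2 [g2 [K1 [K2 K3]]]].
exists (fun us => if us is u :: us' then f1 u :: f2 us' else [::]).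
exists (fun us => if us is u :: us' then g1 u :: g2 us' else [::]).
split; [|split].
- move=> [|u us] //= [Hu Hus]; have [? ->] := H1 _ Hu; have [? ->] := K1 _ Hus; by do 2!split.
- move=> [|u us] //= [Hu Hus]; have [? ->] := H2 _ Hu; have [? ->] := K2 _ Hus; by do 2!split.
- move=> [|u us] [|v vs] //= [Hu Hus] [Hv Hvs]; rewrite (H3 _ _ Hu Hv) (K3 _ _ Hus Hvs) //.
Qed.

Lemma Ft_refl (r : tree) : piso (Ft r) pre (Ft r) pre. Proof. exact: piso_refl. Qed.
Lemma E_refl (l : seq tree) : piso (inE l) preL (inE l) preL. Proof. exact: piso_refl. Qed.

Lemma E_swap (x y : tree) (l : seq tree) : piso (inE (x :: y :: l)) preL (inE (y :: x :: l)) preL.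
Proof.
pose sw (us : seq tree) := if us is u :: v :: us' then v :: u :: us' else us.
exists sw, sw; split; [|split].
- move=> [|u [|v us]] //=; [by case=> _ []|move=> [Hu [Hv Hus]]; by do 2!split].
- move=> [|u [|v us]] //=; [by case=> _ []|move=> [Hu [Hv Hus]]; by do 2!split].
- move=> [|u [|v us]] [|u' [|v' vs]] //= _ _; tauto.
Qed.

Lemma E_perm (l l' : seq tree) : Permutation l l' -> piso (inE l) preL (inE l') preL.
Proof.
elim => [|x {}l {}l' _ IH|x y {}l|{}l l1 l2 _ IH1 _ IH2].
- exact: E_refl.
- apply: E_cons => //; exact: Ft_refl.
- exact: E_swap.
- exact: piso_trans IH1 IH2.
Qed.

Lemma E_filter (l : seq tree) : piso (inE l) preL (inE (filter isNode l)) preL.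
Proof.
elim: l => [|[|a ts] l IH] /=; first exact: E_refl.
- exact: piso_trans (E_leaf l) IH.
- apply: E_cons => //; exact: Ft_refl.
Qed.

Lemma E_F2 (l l' : seq tree) : Forall2 (fun x y => piso (Ft x) pre (Ft y) pre) l l' ->
  piso (inE l) preL (inE l') preL.
Proof. elim => [|x y {}l {}l' H _ IH]; [exact: E_refl | exact: E_cons]. Qed.

Lemma F_node b b' cs cs' : piso (inE cs) preL (inE cs') preL ->
  piso (Ft (Node b cs)) pre (Ft (Node b' cs')) pre.
Proof.
move=> [f [g [H1 [H2 H3]]]].
exists (fun u => if u is Node _ us then Node b' (f us) else Leaf).
exists (fun u => if u is Node _ us then Node b (g us) else Leaf).
split; [|split].
- move=> [|a us] //= [-> Hus]; have [? ->] := H1 _ Hus; by do 2!split.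
- move=> [|a us] //= [-> Hus]; have [? ->] := H2 _ Hus; by do 2!split.
- move=> [|a us] [|a' vs] //; rewrite /Ft !pre_NN => -[-> Hus] [-> Hvs].
  rewrite (H3 _ _ Hus Hvs); tauto.
Qed.

Lemma shl_filter (l : seq tree) : shl l = List.map (@sh G) (filter isNode l).
Proof. elim: l => [|[|a ts] l IH] //=; by rewrite IH. Qed.

Lemma F2_map_inv (l m : seq tree) :
  Forall2 sheq (List.map (@sh G) l) (List.map (@sh G) m) -> Forall2 (fun x y => sheq (sh x) (sh y)) l m.
Proof.
elim: l m => [|x l IH] [|y m] //= H; inversion H; subst => //; constructor; auto.
Qed.

Lemma F2_impl (R S : tree -> tree -> Prop) (P Q : tree -> Prop) l m :
  Forall2 R l m -> Forall P l -> Forall Q m -> (forall x y, P x -> Q y -> R x y -> S x y) ->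
  Forall2 S l m.
Proof.
elim => [|x y {}l {}m Hxy _ IH] //= HP HQ HS; inversion HP; inversion HQ; subst.
constructor; [exact: HS | exact: IH].
Qed.

Lemma Forall_filter (P : tree -> Prop) (p : pred tree) l : Forall P l -> Forall P (filter p l).
Proof. elim: l => [|x l IH] //= H; inversion H; subst; case: (p x) => //; [constructor; auto | auto]. Qed.
Lemma Forall_filter2 (p : pred tree) l : Forall (fun x => p x) (filter p l).
Proof. elim: l => [|x l IH] //=; case E: (p x) => //; constructor => //; by rewrite E. Qed.

Definition Pt (t : tree) := forall t', isNode t -> isNode t' -> sheq (sh t) (sh t') ->
  piso (Ft t) pre (Ft t') pre.

Lemma forest_bwd (rs : seq tree) : Forall Pt rs -> forall rs' : seq tree, sheq (RNode (shl rs)) (RNode (shl rs')) ->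
  piso (inE rs) preL (inE rs') preL.
Proof.
move=> HF rs' H; inversion H as [l1 l2 l2' Hp Hf]; subst.
rewrite !shl_filter in Hp Hf.
have [l3 [El3 Hp3]] := Permutation_map_inv _ _ (Permutation_sym Hp).
subst l2'; have Hf' := F2_map_inv Hf.
apply: piso_trans (E_filter rs) _.
apply: piso_trans; last by apply: piso_sym; exact: E_filter.
apply: piso_trans; last by apply: E_perm; exact: Permutation_sym Hp3.
apply: E_F2.
apply: (F2_impl (P := fun x => Pt x /\ isNode x) (Q := fun x => isNode x)) Hf' _ _ _.
- have := Forall_filter isNode HF; have := Forall_filter2 isNode rs.
  move=> A1 A2; apply/Forall_forall => x Hx.
  by move: (proj1 (Forall_forall _ _) A1 x Hx) (proj1 (Forall_forall _ _) A2 x Hx).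
- exact: Permutation_Forall Hp3 (Forall_filter2 isNode rs').
- move=> x y [Px Nx] Ny Hxy; exact: Px.
Qed.

Lemma tree_bwd : forall t, Pt t.
Proof.
apply: (proj1 (@tlind G Pt (Forall Pt) _ _ _ _)) => //.
- move=> a ts HF [|a' ts'] //= _ _ Hs; apply: F_node; exact: forest_bwd HF ts' Hs.
- move=> t ts H1 H2; by constructor.
Qed.

Lemma bwd (rs rs' : seq tree) : sheq (RNode (shl rs)) (RNode (shl rs')) -> piso (inE rs) preL (inE rs') preL.
Proof.
apply: forest_bwd; apply/Forall_forall => x _; exact: tree_bwd.
Qed.
End B.


Section Br.
Variable G : Type.
Notation tree := (tree G).

Fixpoint cut (u v : tree) : seq tree :=
  match u with
  | Leaf => [:: v]
  | Node _ us => match v with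
    | Leaf => [::]
    | Node _ vs => (fix cl (us vs : seq tree) : seq tree :=
        match us, vs with
        | u1 :: us1, v1 :: vs1 => cut u1 v1 ++ cl us1 vs1
        | _, _ => [::] end) us vs
    end
  end.
Fixpoint cutl (us vs : seq tree) : seq tree :=
  match us, vs with
  | u1 :: us1, v1 :: vs1 => cut u1 v1 ++ cutl us1 vs1
  | _, _ => [::] end.
Lemma cut_NN a b us vs : cut (Node a us) (Node b vs) = cutl us vs. Proof. by []. Qed.

Fixpoint gr (u : tree) (rs : seq tree) : tree :=
  match u with
  | Leaf => head Leaf rs
  | Node a ts => Node a ((fix grl (ts rs : seq tree) : seq tree :=
      match ts with
      | [::] => [::]
      | t :: ts' => gr t (take (nleaves t) rs) :: grl ts' (drop (nleaves t) rs)
      end) ts rs)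
  end.
Fixpoint grl (ts rs : seq tree) : seq tree :=
  match ts with
  | [::] => [::]
  | t :: ts' => gr t (take (nleaves t) rs) :: grl ts' (drop (nleaves t) rs)
  end.
Lemma gr_N a ts rs : gr (Node a ts) rs = Node a (grl ts rs). Proof. by []. Qed.
Lemma size_grl ts rs : size (grl ts rs) = size ts.
Proof. by elim: ts rs => [|t ts IH] rs //=; rewrite IH. Qed.

Fixpoint gl (us : seq tree) (rs : seq tree) {struct us} : seq tree * seq tree :=
  match us with
  | [::] => ([::], rs)
  | u :: us' =>
      let (u', rs1) := graft_aux u rs in
      let (us'', rs2) := gl us' rs1 in (u' :: us'', rs2)
  end.
Lemma graft_aux_N a ts rs : graft_aux (Node a ts) rs = (Node a (gl ts rs).1, (gl ts rs).2).
Proof. by []. Qed.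

Lemma nleaves_N a ts : nleaves (Node a ts) = sumn (map (@nleaves G) ts). Proof. by []. Qed.

Lemma GA : forall u rs rest, size rs = nleaves u -> graft_aux u (rs ++ rest) = (gr u rs, rest).
Proof.
apply: (proj1 (@tlind G (fun u => forall rs rest, size rs = nleaves u -> graft_aux u (rs ++ rest) = (gr u rs, rest))
  (fun ts => forall rs rest, size rs = sumn (map (@nleaves G) ts) -> gl ts (rs ++ rest) = (grl ts rs, rest)) _ _ _ _)).
- by move=> [|r [|??]] //.
- move=> a ts IH rs rest Hs; by rewrite graft_aux_N gr_N IH.
- by move=> [|??] //.
- move=> t ts IHt IHts rs rest /= Hs.
  have Hk : nleaves t <= size rs by rewrite Hs leq_addr.
  rewrite -{1}(cat_take_drop (nleaves t) rs) -catA IHt; last by rewrite size_take_min; apply/minn_idPl.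
  rewrite IHts //; by rewrite size_drop Hs addKn.
Qed.

Lemma graft_gr u rs : size rs = nleaves u -> graft u rs = gr u rs.
Proof. move=> Hs; by rewrite /graft -(cats0 rs) GA ?cats0. Qed.

Lemma pre_gr : forall u rs, pre u (gr u rs).
Proof.
apply: (proj1 (@tlind G (fun u => forall rs, pre u (gr u rs)) (fun ts => forall rs, preL ts (grl ts rs)) _ _ _ _)) => //.
- move=> a ts IH rs; rewrite gr_N pre_NN; by split.
Qed.

Lemma cut_gr : forall u rs, size rs = nleaves u -> cut u (gr u rs) = rs.
Proof.
apply: (proj1 (@tlind G (fun u => forall rs, size rs = nleaves u -> cut u (gr u rs) = rs)
  (fun ts => forall rs, size rs = sumn (map (@nleaves G) ts) -> cutl ts (grl ts rs) = rs) _ _ _ _)).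
- by move=> [|r [|??]] //.
- move=> a ts IH rs Hs; by rewrite gr_N cut_NN IH.
- by move=> [|??].
- move=> t ts IHt IHts rs /= Hs.
  have Hk : nleaves t <= size rs by rewrite Hs leq_addr.
  rewrite IHt; last by rewrite size_take_min; apply/minn_idPl.
  rewrite IHts ?cat_take_drop //; by rewrite size_drop Hs addKn.
Qed.

Lemma size_cut : forall u v, pre u v -> size (cut u v) = nleaves u.
Proof.
apply: (proj1 (@tlind G (fun u => forall v, pre u v -> size (cut u v) = nleaves u)
  (fun ts => forall vs, preL ts vs -> size (cutl ts vs) = sumn (map (@nleaves G) ts)) _ _ _ _)) => //.
- move=> a ts IH [|b vs] //; rewrite pre_NN cut_NN => -[_ H]; exact: IH.
- move=> t ts IHt IHts [|v vs] //= [H1 H2]; by rewrite size_cat IHt // IHts.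
Qed.

Lemma gr_cut : forall u v, pre u v -> gr u (cut u v) = v.
Proof.
apply: (proj1 (@tlind G (fun u => forall v, pre u v -> gr u (cut u v) = v)
  (fun ts => forall vs, preL ts vs -> grl ts (cutl ts vs) = vs) _ _ _ _)) => //.
- move=> a ts IH [|b vs] //; rewrite pre_NN cut_NN gr_N => -[-> H]; by rewrite IH.
- by move=> [|??].
- move=> t ts IHt IHts [|v vs] //= [H1 H2].
  by rewrite take_size_cat ?size_cut // drop_size_cat ?size_cut // IHt // IHts.
Qed.

Variable ar : G -> nat.

Lemma all_take_ (p : pred tree) n s : all p s -> all p (take n s).
Proof. by rewrite -{1}(cat_take_drop n s) all_cat => /andP []. Qed.
Lemma all_drop_ (p : pred tree) n s : all p s -> all p (drop n s).
Proof. by rewrite -{1}(cat_take_drop n s) all_cat => /andP []. Qed.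

Lemma wf_gr : forall u rs, wf ar u -> all (wf ar) rs -> size rs = nleaves u -> wf ar (gr u rs).
Proof.
apply: (proj1 (@tlind G (fun u => forall rs, wf ar u -> all (wf ar) rs -> size rs = nleaves u -> wf ar (gr u rs))
  (fun ts => forall rs, all (wf ar) ts -> all (wf ar) rs -> size rs = sumn (map (@nleaves G) ts) -> all (wf ar) (grl ts rs)) _ _ _ _)) => //.
- by move=> [|r [|??]] //= _ /andP [].
- move=> a ts IH rs /= /andP [Hs Hts] Hrs Hsz; rewrite size_grl Hs /=; exact: IH.
- move=> t ts IHt IHts rs /= /andP [Ht Hts] Hrs Hs.
  have Hk : nleaves t <= size rs by rewrite Hs leq_addr.
  rewrite IHt //=; [|exact: all_take_|by rewrite size_take_min; apply/minn_idPl].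
  apply: IHts => //; [exact: all_drop_|by rewrite size_drop Hs addKn].
Qed.

Lemma wf_cut : forall u v, wf ar v -> pre u v -> all (wf ar) (cut u v).
Proof.
apply: (proj1 (@tlind G (fun u => forall v, wf ar v -> pre u v -> all (wf ar) (cut u v))
  (fun ts => forall vs, all (wf ar) vs -> preL ts vs -> all (wf ar) (cutl ts vs)) _ _ _ _)) => //.
- by move=> v /= ->.
- move=> a ts IH [|b vs] // /andP [_ Hvs]; rewrite pre_NN cut_NN => -[_ H]; exact: IH.
- move=> t ts IHt IHts [|v vs] //= /andP [Hv Hvs] [H1 H2]; by rewrite all_cat IHt // IHts.
Qed.

Lemma wf_pre : forall u r, wf ar r -> pre u r -> wf ar u.
Proof.
apply: (proj1 (@tlind G (fun u => forall r, wf ar r -> pre u r -> wf ar u)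
  (fun ts => forall rs, all (wf ar) rs -> preL ts rs -> all (wf ar) ts) _ _ _ _)) => //.
- move=> a ts IH [|b vs] // /andP [Hs Hvs]; rewrite pre_NN => -[-> H].
  apply/andP; split; [by rewrite (preL_size H) | exact: IH Hvs H].
- move=> t ts IHt IHts [|v vs] //= /andP [Hv Hvs] [H1 H2]; by rewrite (IHt _ Hv H1) (IHts _ Hvs H2).
Qed.
Lemma wf_preL us rs : all (wf ar) rs -> preL us rs -> all (wf ar) us.
Proof.
elim: us rs => [|u us IH] [|r rs] //= /andP [Hr Hrs] [H1 H2]; by rewrite (wf_pre Hr H1) (IH _ Hrs H2).
Qed.

Lemma cut_mono : forall s u v, pre s u -> pre s v -> (pre u v <-> preL (cut s u) (cut s v)).
Proof.
apply: (proj1 (@tlind G (fun s => forall u v, pre s u -> pre s v -> (pre u v <-> preL (cut s u) (cut s v)))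
  (fun ts => forall us vs, preL ts us -> preL ts vs -> (preL us vs <-> preL (cutl ts us) (cutl ts vs))) _ _ _ _)).
- move=> u v _ _ /=; tauto.
- move=> a ts IH [|b us] [|c vs] //; rewrite !pre_NN !cut_NN => -[<- Hu] [<- Hv].
  rewrite -IH //; tauto.
- by move=> [|??] [|??].
- move=> t ts IHt IHts [|u us] [|v vs] //= [H1 H2] [H3 H4].
  rewrite preL_cat; last by rewrite !size_cut.
  rewrite -IHt // -IHts //.
Qed.

Lemma prefix_pre u v : wf ar u -> (Defs.prefix ar u v <-> pre u v /\ wf ar v).
Proof.
move=> Hu; split.
- move=> [rs [Hs [Hrs ->]]]; rewrite graft_gr //; split; [exact: pre_gr|exact: wf_gr].
- move=> [H Hv]; exists (cut u v); split; first exact: size_cut.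
  split; first exact: wf_cut.
  by rewrite graft_gr ?size_cut // gr_cut.
Qed.

Lemma bridge s rs : wf ar s -> all (wf ar) rs -> size rs = nleaves s ->
  piso (in_interval ar s (graft s rs)) (Defs.prefix ar) (inE rs) preL.
Proof.
move=> Hs Hrs Hsz; rewrite graft_gr //.
have Ht : wf ar (gr s rs) by exact: wf_gr.
have Hst : pre s (gr s rs) by exact: pre_gr.
exists (cut s), (gr s); split; [|split].
- move=> u [Hu [Hsu Hut]].
  move: Hsu Hut; rewrite !prefix_pre // => -[Hsu _] [Hut _].
  split; last exact: gr_cut.
  rewrite /inE -(cut_gr Hsz) -cut_mono //.
- move=> us Hus; have Hsz' : size us = nleaves s by rewrite (preL_size Hus).
  have Hw : wf ar (gr s us) by apply: wf_gr => //; exact: wf_preL Hus.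
  split; last exact: cut_gr.
  split => //; split; rewrite prefix_pre //; split => //; first exact: pre_gr.
  apply/(cut_mono (pre_gr s us) (pre_gr s rs)); by rewrite !cut_gr.
- move=> u v [Hu [Hsu _]] [Hv [Hsv _]]; rewrite prefix_pre //.
  move: Hsu Hsv; rewrite !prefix_pre // => -[Hsu _] [Hsv _].
  rewrite -cut_mono //; tauto.
Qed.
End Br.

Lemma sh_tmap (G H : Type) (h : G -> H) :
  (forall t, sh (tmap h t) = sh t) /\ (forall ts, shl (map (tmap h) ts) = shl ts).
Proof.
apply: (@tlind G (fun t => sh (tmap h t) = sh t)
  (fun ts => shl (map (tmap h) ts) = shl ts)) => //.
- move=> a ts IH; change (sh (Node (h a) (map (tmap h) ts)) = sh (Node a ts)).
  by rewrite !sh_Node IH.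
- move=> [|a us] ts IHt IHts; first exact: IHts.
  change (shl (Node (h a) (map (tmap h) us) :: map (tmap h) ts) = shl (Node a us :: ts)).
  rewrite !shl_N IHts; congr (_ :: _); exact: IHt.
Qed.

Lemma sh_diamond (G : Type) (rs : seq (tree G)) : sh (diamond rs) = RNode (shl rs).
Proof. rewrite /diamond sh_Node; congr RNode; exact: (sh_tmap Some).2. Qed.

Unset Implicit Arguments.

Theorem theorem3p11 (G : finType) (ar : G -> nat)
  (har : forall a : G, 0 < ar a)
  (s t s' t' : tree G) (rs rs' : seq (tree G)) :
  wf ar s -> wf ar s' ->
  (* t \ s = rs, i.e. t = s o rs with rs a forest of G-trees of size |s| *)
  size rs = nleaves s -> all (wf ar) rs -> t = graft s rs ->
  size rs' = nleaves s' -> all (wf ar) rs' -> t' = graft s' rs' ->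
  (intervals_iso ar s t s' t' <-> sheq (sh (diamond rs)) (sh (diamond rs'))).
Proof.
move=> Hs Hs' Hsz Hrs Ht Hsz' Hrs' Ht'; subst t t'.
rewrite !sh_diamond.
have B1 := bridge Hs Hrs Hsz; have B2 := bridge Hs' Hrs' Hsz'.
split.
- move=> I; apply: (@fwd _ (fsize rs).+1) => //.
  apply: piso_trans (piso_sym B1) _; exact: piso_trans I B2.
- move=> H; have I := bwd H.
  exact: piso_trans B1 (piso_trans I (piso_sym B2)).
Qed.
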